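(* Let $n\in\mathbb N$. Then $\delta(n)<\delta(m)$ for every $m\in\mathbb N$ with $m>n$ if and only if $n=k^2$ or $n=k^2+k$ for some $k\in\mathbb N$ (in which case $\delta(n)=2k$, resp. $\delta(n)=2k+1$).
   Context: $\mathbb N$ is the set of positive integers. For $n\in\mathbb N$, $\delta(n)=\min\{\,r+s : r,s\in\mathbb N,\ r\le s,\ rs=n\,\}$, i.e. the minimum of $d+n/d$ over positive divisors $d$ of $n$. *)

(* Defs.v *)
From mathcomp Require Import all_boot.
Set Implicit Arguments. Unset Strict Implicit. Unset Printing Implicit Defensive.

(* The pair (1, n) is always admissible for n >= 1, so the default value
   n.+1 of the iterated minimum is never strictly below the true minimum. *)
Definition delta (n : nat) : nat :=
  \big[minn/n.+1]_(r <- divisors n | r <= n %/ r) (r + n %/ r).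

(* Main.v *)
Require Import Defs.
From mathcomp Require Import all_boot.
From mathcomp Require Import zify.

Lemma bigmin_seq_le (d : nat) (l : seq nat) (P : pred nat) (F : nat -> nat) x :
  x \in l -> P x -> \big[minn/d]_(y <- l | P y) F y <= F x.
Proof.
elim: l => [|a l IH] //; rewrite inE big_cons => /orP [/eqP <- Px|xl Px].
  by rewrite Px geq_minl.
case: (P a); last exact: IH.
by rewrite geq_min IH // orbT.
Qed.

Lemma delta_le n r s : 0 < n -> r * s = n -> delta n <= r + s.
Proof.
move=> n0.
wlog rs : r s / r <= s.
  move=> H E; case: (leqP r s) => h; first exact: H.
  rewrite addnC; apply: H; [exact: ltnW | by rewrite mulnC].
move=> E.
have r0 : 0 < r by case: r E rs => //= E; subst; rewrite mul0n in n0.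
have q : n %/ r = s by rewrite -E mulKn.
have rin : r \in divisors n by rewrite -dvdn_divisors // -E dvdn_mulr.
rewrite -q; apply: bigmin_seq_le => //; by rewrite q.
Qed.

Arguments delta_le {n r s}.

Lemma delta_att n : 0 < n -> exists r s, r * s = n /\ delta n = r + s.
Proof.
move=> n0; rewrite /delta big_seq_cond.
apply: (big_ind (fun x => exists r s, r * s = n /\ x = r + s)).
- by exists 1, n; rewrite mul1n add1n.
- move=> x y [r [s [E1 E2]]] [r' [s' [E1' E2']]].
  case: (leqP x y) => h.
    by exists r, s.
  by exists r', s'.
- move=> r /andP [] ; rewrite -dvdn_divisors // => /dvdnP [s E] _.
  case: r E => [|r] E; first by rewrite E muln0 in n0.
  by exists r.+1, s; rewrite E mulnK // mulnC.
Qed.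

Lemma delta_sq n : 0 < n -> 4 * n <= delta n ^ 2.
Proof.
move=> n0; have [r [s [E ->]]] := @delta_att n n0.
rewrite -E expnS expn1.
case: (leqP r s) => h.
  have [d ->] : exists d, s = r + d by exists (s - r); lia.
  nia.
have [d ->] : exists d, r = s + d by exists (r - s); lia.
nia.
Qed.

Arguments delta_sq {n}.

Lemma delta_k2 k : 0 < k -> delta (k ^ 2) = 2 * k.
Proof.
move=> k0; have n0 : 0 < k ^ 2 by rewrite expn_gt0 k0.
have h1 := delta_le n0 (esym (expnS k 1)).
have h2 := delta_sq n0.
apply/eqP; rewrite eqn_leq; apply/andP; split; first by rewrite expn1 in h1; lia.
move: h2; set d := delta _ => h2.
rewrite leqNgt; apply/negP => h.
have : d * d <= (2 * k).-1 * (2 * k).-1 by apply: leq_mul; lia.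
nia.
Qed.

Lemma delta_k2k k : 0 < k -> delta (k ^ 2 + k) = 2 * k + 1.
Proof.
move=> k0; have n0 : 0 < k ^ 2 + k by lia.
have h1 := delta_le (r := k) (s := k.+1) n0 ltac:(nia).
have h2 := delta_sq n0.
apply/eqP; rewrite eqn_leq; apply/andP; split; first by lia.
move: h2; set d := delta _ => h2.
rewrite leqNgt; apply/negP => h.
have : d * d <= (2 * k) * (2 * k) by apply: leq_mul; lia.
nia.
Qed.

Theorem proposition5p4 (n : nat) : 0 < n ->
  ((forall m : nat, n < m -> delta n < delta m) <->
   (exists k : nat, 0 < k /\ (n = k ^ 2 \/ n = k ^ 2 + k)))
  /\ (forall k : nat, 0 < k -> n = k ^ 2 -> delta n = 2 * k)
  /\ (forall k : nat, 0 < k -> n = k ^ 2 + k -> delta n = 2 * k + 1).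
Proof.
move=> n0; split; last first.
  by split=> k k0 ->; [apply: delta_k2 | apply: delta_k2k].
split.
- move=> H.
  have h2 := delta_sq n0.
  move: h2; set t := delta n => h2.
  have [k [tk|tk]] : exists k, t = 2 * k \/ t = 2 * k + 1.
    exists t./2; have := odd_double_half t; rewrite -muln2.
    by case: (odd t) => /= Ht; [right|left]; lia.
  + have kn : n <= k ^ 2 by rewrite tk in h2; nia.
    case: (ltnP n (k ^ 2)) => h.
      have k0 : 0 < k by case: k h {tk kn} => //; rewrite expn0n.
      by have := H _ h; rewrite delta_k2 // -tk ltnn.
    by exists k; split; [nia | left; lia].
  + have kn : n <= k ^ 2 + k by rewrite tk in h2; nia.
    case: (ltnP n (k ^ 2 + k)) => h.
      have k0 : 0 < k by case: k h {tk kn} => //; rewrite expn0n.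
      by have := H _ h; rewrite delta_k2k // -tk ltnn.
    by exists k; split; [nia | right; lia].
- move=> [k [k0 [E|E]]] m nm; have m0 : 0 < m by lia.
  + rewrite E delta_k2 //; have := delta_sq m0; set d := delta m => h.
    rewrite ltnNge; apply/negP => h'.
    have : d * d <= (2 * k) * (2 * k) by apply: leq_mul.
    nia.
  + rewrite E delta_k2k //; have := delta_sq m0; set d := delta m => h.
    rewrite ltnNge; apply/negP => h'.
    have : d * d <= (2 * k + 1) * (2 * k + 1) by apply: leq_mul.
    nia.
Qed.
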